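(* Let $k,t\ge2$ be coprime integers and suppose that $mk \leq t < (m+1)k$ for some integer $m \geq 2$. Let $1\le r\le t-k$ and let $1\le\bar r\le t$ be the representative of $rk^{-1}\pmod t$. If $\bar{r} \geq m + 1$, then \[ k\,\psi_{k/t}\left(\frac{r}{t}\right)> \psi_{1/t}\left(\frac{\bar{r}}{t}\right), \] where $\psi_c(y) \coloneqq \psi(y+c)-\psi(y)$ for $c,y>0$.
   Context: $\psi=\Gamma'/\Gamma$ is the digamma function. *)

(* Defs.v *)
From Stdlib Require Import Reals Arith.
From Coquelicot Require Import Coquelicot.
Open Scope R_scope.

Definition Gamma (x : R) : R :=
  RInt_gen (fun t => Rpower t (x - 1) * exp (- t))
           (at_right 0) (Rbar_locally p_infty).

Definition digamma (x : R) : R := Derive Gamma x / Gamma x.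

Definition psi_c (c y : R) : R := digamma (y + c) - digamma y.

(* Main.v *)
Require Import Defs.
From Stdlib Require Import Reals Arith ZArith Lra Lia Psatz.
From Coquelicot Require Import Coquelicot.
Open Scope R_scope.

Definition fg (x t : R) : R := exp ((x - 1) * ln t - t).

Lemma fg_eq x t : Rpower t (x - 1) * exp (- t) = fg x t.
Proof. unfold Rpower, fg. rewrite <- exp_plus. reflexivity. Qed.

Lemma fg_pos x t : 0 < fg x t.
Proof. apply exp_pos. Qed.

Lemma fg_cont x t : 0 < t -> continuous (fg x) t.
Proof.
  intros Ht. apply (@ex_derive_continuous R_AbsRing R_NormedModule). unfold fg. auto_derive. lra.
Qed.

Lemma fg_exRInt x a b : 0 < a -> 0 < b -> ex_RInt (fg x) a b.
Proof.
  intros Ha Hb. apply (@ex_RInt_continuous R_CompleteNormedModule). intros z Hz. apply fg_cont.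
  assert (0 < Rmin a b) by (apply Rmin_glb_lt; auto). lra.
Qed.

Lemma RInt_mono x a' a b b' : 0 < a' -> a' <= a -> a <= b -> b <= b' ->
  RInt (fg x) a b <= RInt (fg x) a' b'.
Proof.
  intros H1 H2 H3 H4.
  rewrite <- (RInt_Chasles (fg x) a' a b'); try apply fg_exRInt; try lra.
  rewrite <- (RInt_Chasles (fg x) a b b'); try apply fg_exRInt; try lra.
  assert (0 <= RInt (fg x) a' a).
  { apply RInt_ge_0; auto. apply fg_exRInt; lra. intros; apply Rlt_le, fg_pos. }
  assert (0 <= RInt (fg x) b b').
  { apply RInt_ge_0; auto. apply fg_exRInt; lra. intros; apply Rlt_le, fg_pos. }
  unfold plus; simpl. lra.
Qed.

Lemma exp_le_inc x y : x <= y -> exp x <= exp y.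
Proof. intros [H|H]. left; apply exp_increasing; auto. subst; lra. Qed.

Lemma exp_sub_ln u t : 0 < t -> exp (u - ln t) = exp u / t.
Proof.
  intros Ht. unfold Rminus. rewrite exp_plus, exp_Ropp, exp_ln; auto.
Qed.

Lemma exp_mult_nat (n : nat) y : exp (INR n * y) = exp y ^ n.
Proof.
  induction n. simpl. rewrite Rmult_0_l, exp_0. reflexivity.
  rewrite S_INR, Rmult_plus_distr_r, exp_plus, IHn, Rmult_1_l. simpl. ring.
Qed.

Lemma pow_le_exp (N : nat) t : (1 <= N)%nat -> 0 <= t -> t ^ N <= INR N ^ N * exp t.
Proof.
  intros HN Ht.
  assert (HN' : 1 <= INR N) by (apply (le_INR 1); auto).
  replace (exp t) with (exp (t / INR N) ^ N).
  2:{ rewrite <- exp_mult_nat. f_equal. field. lra. }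
  rewrite <- Rpow_mult_distr.
  apply pow_incr. split; auto.
  pose proof (exp_ineq1_le (t / INR N)).
  assert (t <= INR N * (t / INR N)) by (right; field; lra).
  assert (0 <= t / INR N) by (apply Rdiv_le_0_compat; lra).
  nra.
Qed.

Lemma tail_bound s : exists K, 0 < K /\ forall t, 1 <= t -> exp (s * ln t - t) <= K.
Proof.
  destruct (archimed s) as [H1 _].
  set (N := S (Z.to_nat (up s))).
  assert (HN : s <= INR N).
  { unfold N. rewrite S_INR. destruct (Z.lt_ge_cases (up s) 0).
    - replace (Z.to_nat (up s)) with 0%nat by lia. simpl. assert (IZR (up s) <= -1) by (apply IZR_le; lia). lra.
    - rewrite INR_IZR_INZ, Z2Nat.id by lia. lra. }
  exists (INR N ^ N). split. apply pow_lt. unfold N; rewrite S_INR; pose proof (pos_INR (Z.to_nat (up s))); lra.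
  intros t Ht.
  assert (Hl : 0 <= ln t) by (rewrite <- ln_1; apply ln_le; lra).
  apply Rle_trans with (exp (INR N * ln t - t)).
  { apply exp_le_inc. nra. }
  unfold Rminus. rewrite exp_plus, exp_Ropp.
  replace (exp (INR N * ln t)) with (t ^ N).
  2:{ rewrite <- Rpower_pow by lra. reflexivity. }
  pose proof (pow_le_exp N t ltac:(unfold N; lia) ltac:(lra)).
  pose proof (exp_pos t).
  apply (Rmult_le_reg_r (exp t)); auto.
  rewrite Rmult_assoc, Rinv_l by lra. lra.
Qed.

Lemma IntB1 x a : 0 < x -> 0 < a <= 1 -> RInt (fg x) a 1 <= 1 / x.
Proof.
  intros Hx Ha.
  assert (Hg : is_RInt (fun t => exp ((x-1) * ln t)) a 1
                 (minus (exp (x * ln 1) / x) (exp (x * ln a) / x))).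
  { apply (@is_RInt_derive R_CompleteNormedModule (fun t => exp (x * ln t) / x)).
    - intros t Ht. rewrite Rmin_left in Ht by lra. rewrite Rmax_right in Ht by lra.
      auto_derive. lra.
      replace ((x - 1) * ln t) with (x * ln t - ln t) by ring.
      rewrite exp_sub_ln by lra. field. split; lra.
    - intros t Ht. rewrite Rmin_left in Ht by lra. rewrite Rmax_right in Ht by lra.
      apply (@ex_derive_continuous R_AbsRing R_NormedModule). auto_derive. lra. }
  apply Rle_trans with (RInt (fun t => exp ((x-1) * ln t)) a 1).
  - apply RInt_le. lra. apply fg_exRInt; lra.
    eexists; apply Hg.
    intros t Ht. unfold fg. apply exp_le_inc. lra.
  - rewrite (is_RInt_unique _ _ _ _ Hg). rewrite ln_1, Rmult_0_r, exp_0.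
    unfold minus, plus, opp; simpl.
    pose proof (exp_pos (x * ln a)).
    apply Rle_trans with (1/x - 0). 2: lra.
    unfold Rminus. apply Rplus_le_compat_l. apply Ropp_le_contravar.
    apply Rlt_le, Rdiv_lt_0_compat; auto.
Qed.

Lemma IntB2 x K b : 0 < K -> (forall t, 1 <= t -> exp ((x + 1) * ln t - t) <= K) ->
  1 <= b -> RInt (fg x) 1 b <= K.
Proof.
  intros HK Hb0 Hb.
  assert (Hg : is_RInt (fun t => K / (t * t)) 1 b (minus (- K / b) (- K / 1))).
  { apply (@is_RInt_derive R_CompleteNormedModule (fun t => - K / t)).
    - intros t Ht. rewrite Rmin_left in Ht by lra. rewrite Rmax_right in Ht by lra.
      auto_derive. lra. field. lra.
    - intros t Ht. rewrite Rmin_left in Ht by lra. rewrite Rmax_right in Ht by lra.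
      apply (@ex_derive_continuous R_AbsRing R_NormedModule). auto_derive. nra. }
  apply Rle_trans with (RInt (fun t => K / (t * t)) 1 b).
  - apply RInt_le. lra. apply fg_exRInt; lra.
    eexists; apply Hg.
    intros t Ht. unfold fg.
    replace ((x - 1) * ln t - t) with (((x + 1) * ln t - t) - ln t - ln t) by ring.
    rewrite !exp_sub_ln by lra.
    unfold Rdiv. rewrite Rinv_mult, <- Rmult_assoc.
    pose proof (Hb0 t ltac:(lra)).
    apply Rmult_le_compat_r. apply Rlt_le, Rinv_0_lt_compat; lra.
    apply Rmult_le_compat_r. apply Rlt_le, Rinv_0_lt_compat; lra. auto.
  - rewrite (is_RInt_unique _ _ _ _ Hg).
    unfold minus, plus, opp; simpl.
    assert (0 < K / b) by (apply Rdiv_lt_0_compat; lra).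
    replace (- K / b + - (- K / 1)) with (K - K / b) by (field; lra). lra.
Qed.

Lemma nat_gt r : exists n : nat, r < INR n.
Proof.
  destruct (archimed r) as [H1 _].
  exists (Z.to_nat (up r)). destruct (Z.lt_ge_cases (up r) 0).
  - replace (Z.to_nat (up r)) with 0%nat by lia. simpl.
    assert (IZR (up r) <= -1) by (apply IZR_le; lia). lra.
  - rewrite INR_IZR_INZ, Z2Nat.id by lia. lra.
Qed.

Definition aN (n : nat) := exp (- INR n).
Definition bN (n : nat) := INR n + 1.
Definition Sq (x : R) (n : nat) := RInt (fg x) (aN n) (bN n).

Lemma aN_pos n : 0 < aN n. Proof. apply exp_pos. Qed.
Lemma aN_le1 n : aN n <= 1.
Proof. unfold aN. rewrite <- exp_0. apply exp_le_inc. pose proof (pos_INR n). lra. Qed.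
Lemma bN_ge1 n : 1 <= bN n.
Proof. unfold bN. pose proof (pos_INR n). lra. Qed.

Lemma Sq_incr x n : Sq x n <= Sq x (S n).
Proof.
  unfold Sq. apply RInt_mono. apply aN_pos.
  unfold aN. apply exp_le_inc. rewrite S_INR. lra.
  pose proof (aN_le1 n); pose proof (bN_ge1 n); lra.
  unfold bN. rewrite S_INR. lra.
Qed.

Lemma Sq_incr_le x n m : (n <= m)%nat -> Sq x n <= Sq x m.
Proof.
  induction 1. lra. pose proof (Sq_incr x m). lra.
Qed.

Lemma Sq_bound x : 0 < x -> exists M, forall n, Sq x n <= M.
Proof.
  intros Hx. destruct (tail_bound (x + 1)) as [K [HK HKb]].
  exists (1 / x + K). intros n. unfold Sq.
  rewrite <- (RInt_Chasles (fg x) (aN n) 1 (bN n)).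
  2: apply fg_exRInt; try lra; apply aN_pos.
  2: apply fg_exRInt; try lra; pose proof (bN_ge1 n); lra.
  unfold plus; simpl.
  pose proof (IntB1 x (aN n) Hx ltac:(split; [apply aN_pos | apply aN_le1])).
  pose proof (IntB2 x K (bN n) HK HKb (bN_ge1 n)). lra.
Qed.

Lemma Sq_lim x : 0 < x -> exists l : R, is_lim_seq (Sq x) l.
Proof.
  intros Hx. destruct (Sq_bound x Hx) as [M HM].
  destruct (ex_finite_lim_seq_incr (Sq x) M (Sq_incr x) HM) as [l Hl].
  exists l; auto.
Qed.

Lemma Sq_gen x (l : R) : 0 < x -> is_lim_seq (Sq x) l ->
  is_RInt_gen (fg x) (at_right 0) (Rbar_locally p_infty) l.
Proof.
  intros Hx Hl.
  assert (Hle : forall n, Sq x n <= l) by (apply is_lim_seq_incr_compare; auto; apply Sq_incr).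
  unfold is_RInt_gen, filterlimi, filter_le, filtermapi.
  intros P [eps HP].
  pose proof (proj2 (is_lim_seq_spec _ _) Hl eps) as [N HN].
  specialize (HN N (Nat.le_refl _)).
  apply Filter_prod with (fun a => 0 < a < aN N) (fun b => bN N < b).
  - exists (mkposreal _ (aN_pos N)). intros y Hy Hy0. split; auto.
    unfold ball in Hy; simpl in Hy. unfold AbsRing_ball, abs, minus, plus, opp in Hy; simpl in Hy.
    rewrite Rabs_right in Hy by lra. lra.
  - exists (bN N). auto.
  - intros a b Ha Hb. simpl.
    pose proof (aN_le1 N); pose proof (bN_ge1 N).
    exists (RInt (fg x) a b). split.
    + apply (@RInt_correct R_CompleteNormedModule). apply fg_exRInt; lra.
    + apply HP. unfold ball; simpl. unfold AbsRing_ball, abs, minus, plus, opp; simpl.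
      assert (H1 : Sq x N <= RInt (fg x) a b).
      { unfold Sq. apply RInt_mono; lra. }
      destruct (nat_gt (Rmax (- ln a) (b + INR N))) as [n Hn].
      assert (Hn1 := Rmax_l (- ln a) (b + INR N)).
      assert (Hn2 := Rmax_r (- ln a) (b + INR N)).
      assert (H2 : RInt (fg x) a b <= Sq x n).
      { unfold Sq. apply RInt_mono.
        apply aN_pos.
        unfold aN. rewrite <- (exp_ln a) by lra. apply exp_le_inc. lra.
        lra.
        unfold bN. pose proof (pos_INR N). lra. }
      specialize (Hle n).
      apply Rabs_lt_between'. split.
      * apply Rabs_lt_between' in HN. lra.
      * pose proof (cond_pos eps). lra.
Qed.

Lemma Gamma_eq x (l : R) : 0 < x -> is_lim_seq (Sq x) l -> Gamma x = l.
Proof.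
  intros Hx Hl. unfold Gamma.
  rewrite (@RInt_gen_ext_eq R_CompleteNormedModule _ _ (at_right_proper_filter 0) (Rbar_locally_filter p_infty) _ (fg x)).
  - apply (@is_RInt_gen_unique R_CompleteNormedModule _ _ (Proper_StrongProper _ (at_right_proper_filter 0)) (Proper_StrongProper _ (Rbar_locally_filter p_infty))). apply Sq_gen; auto.
  - intros t. apply fg_eq.
  - exists l. apply (is_RInt_gen_ext (Fa := at_right 0) (Fb := Rbar_locally p_infty) (fg x)).
    + apply filter_forall. intros ab t _. symmetry. apply fg_eq.
    + apply Sq_gen; auto.
Qed.

Lemma Gamma_lim x : 0 < x -> is_lim_seq (Sq x) (Gamma x).
Proof.
  intros Hx. destruct (Sq_lim x Hx) as [l Hl]. rewrite (Gamma_eq x l); auto.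
Qed.

Lemma Gamma_pos x : 0 < x -> 0 < Gamma x.
Proof.
  intros Hx.
  assert (H1 : 0 < Sq x 1).
  { unfold Sq. apply RInt_gt_0.
    - unfold aN, bN. assert (exp (- INR 1) < exp 0) by (apply exp_increasing; rewrite INR_1; lra).
      rewrite exp_0 in H. pose proof INR_1. lra.
    - intros; apply fg_pos.
    - intros t Ht. apply fg_cont. pose proof (aN_pos 1). lra. }
  pose proof (is_lim_seq_incr_compare _ _ (Gamma_lim x Hx) (Sq_incr x) 1). lra.
Qed.

Lemma Gamma_comb p a c al be : 0 < p -> 0 < a -> 0 < c -> 0 <= al -> 0 <= be ->
  (forall t, 0 < t -> fg p t <= al * fg a t + be * fg c t) ->
  Gamma p <= al * Gamma a + be * Gamma c.
Proof.
  intros Hp Ha Hc Hal Hbe Hpt.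
  assert (Hn : forall n, Sq p n <= al * Sq a n + be * Sq c n).
  { intros n. unfold Sq.
    pose proof (aN_pos n). pose proof (aN_le1 n). pose proof (bN_ge1 n).
    assert (Hi : is_RInt (fun t => plus (scal al (fg a t)) (scal be (fg c t))) (aN n) (bN n)
                   (plus (scal al (RInt (fg a) (aN n) (bN n))) (scal be (RInt (fg c) (aN n) (bN n))))).
    { apply (@is_RInt_plus R_NormedModule); apply (@is_RInt_scal R_NormedModule);
      apply (@RInt_correct R_CompleteNormedModule); apply fg_exRInt; lra. }
    pose proof (is_RInt_unique _ _ _ _ Hi) as E. unfold plus, scal in E; simpl in E; unfold mult in E; simpl in E. rewrite <- E.
    apply RInt_le. lra. apply fg_exRInt; lra. eexists; exact Hi.
    intros t Ht. unfold plus, scal; simpl. unfold mult; simpl. apply Hpt. lra. }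
  pose proof (is_lim_seq_le _ _ _ _ Hn (Gamma_lim p Hp)
      (is_lim_seq_plus' _ _ _ _ (is_lim_seq_scal_l _ al _ (Gamma_lim a Ha))
                               (is_lim_seq_scal_l _ be _ (Gamma_lim c Hc)))).
  simpl in H. exact H.
Qed.

Lemma amgm l u v : 0 <= l <= 1 -> exp (l * u + (1 - l) * v) <= l * exp u + (1 - l) * exp v.
Proof.
  intros Hl. set (w := l * u + (1 - l) * v).
  assert (Hu : exp w * (1 + (u - w)) <= exp u).
  { pose proof (exp_ineq1_le (u - w)). replace u with (w + (u - w)) at 2 by ring.
    rewrite exp_plus. pose proof (exp_pos w). nra. }
  assert (Hv : exp w * (1 + (v - w)) <= exp v).
  { pose proof (exp_ineq1_le (v - w)). replace v with (w + (v - w)) at 2 by ring.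
    rewrite exp_plus. pose proof (exp_pos w). nra. }
  assert (E : l * (1 + (u - w)) + (1 - l) * (1 + (v - w)) = 1) by (unfold w; ring).
  assert (exp w = exp w * (l * (1 + (u - w)) + (1 - l) * (1 + (v - w)))) by (rewrite E; ring).
  nra.
Qed.

Lemma holder l a c : 0 <= l <= 1 -> 0 < a -> 0 < c ->
  Gamma (l * a + (1 - l) * c) <= exp (l * ln (Gamma a) + (1 - l) * ln (Gamma c)).
Proof.
  intros Hl Ha Hc.
  pose proof (Gamma_pos a Ha) as Ga. pose proof (Gamma_pos c Hc) as Gc.
  set (K := exp (l * ln (Gamma a) + (1 - l) * ln (Gamma c))).
  assert (HK : 0 < K) by apply exp_pos.
  assert (Hp : 0 < l * a + (1 - l) * c) by (destruct (Rle_lt_or_eq_dec 0 l); nra).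
  pose proof (Gamma_comb (l * a + (1 - l) * c) a c (K * l / Gamma a) (K * (1 - l) / Gamma c)
     Hp Ha Hc) as H.
  assert (Hx : Gamma (l * a + (1 - l) * c) <= K * l / Gamma a * Gamma a + K * (1 - l) / Gamma c * Gamma c).
  { apply H. apply Rmult_le_pos; [nra | apply Rlt_le, Rinv_0_lt_compat; lra].
    apply Rmult_le_pos; [nra | apply Rlt_le, Rinv_0_lt_compat; lra].
    intros t Ht. unfold fg.
    set (A := (a - 1) * ln t - t - ln (Gamma a)).
    set (B := (c - 1) * ln t - t - ln (Gamma c)).
    replace ((l * a + (1 - l) * c - 1) * ln t - t) with
      ((l * A + (1 - l) * B) + (l * ln (Gamma a) + (1 - l) * ln (Gamma c))) by (unfold A, B; ring).
    rewrite exp_plus. fold K.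
    pose proof (amgm l A B Hl).
    unfold A, B in H0. rewrite !exp_sub_ln in H0 by lra.
    replace (K * l / Gamma a * exp ((a - 1) * ln t - t) + K * (1 - l) / Gamma c * exp ((c - 1) * ln t - t))
      with (K * (l * (exp ((a - 1) * ln t - t) / Gamma a) + (1 - l) * (exp ((c - 1) * ln t - t) / Gamma c))) by (field; lra).
    unfold A, B. rewrite Rmult_comm. apply Rmult_le_compat_l; lra. }
  replace (K * l / Gamma a * Gamma a + K * (1 - l) / Gamma c * Gamma c) with K in Hx by (field; lra).
  exact Hx.
Qed.

Lemma Gamma_convex l a c : 0 <= l <= 1 -> 0 < a -> 0 < c ->
  Gamma (l * a + (1 - l) * c) <= l * Gamma a + (1 - l) * Gamma c.
Proof.
  intros Hl Ha Hc. eapply Rle_trans. apply holder; auto.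
  pose proof (amgm l (ln (Gamma a)) (ln (Gamma c)) Hl).
  rewrite !exp_ln in H by (apply Gamma_pos; auto). exact H.
Qed.

Lemma lim_uniq u (a b : R) : is_lim_seq u a -> is_lim_seq u b -> a = b.
Proof.
  intros Ha Hb. apply is_lim_seq_unique in Ha. apply is_lim_seq_unique in Hb.
  rewrite Ha in Hb. injection Hb; auto.
Qed.

Lemma lim0 u C : (forall n, 0 <= u n <= C / (INR n + 1)) -> is_lim_seq u 0.
Proof.
  intros H. apply is_lim_seq_spec. intros eps.
  destruct (nat_gt (C / eps)) as [N HN]. exists N. intros n Hn.
  rewrite Rminus_0_r. destruct (H n) as [H1 H2]. rewrite Rabs_right by lra.
  pose proof (cond_pos eps).
  apply le_INR in Hn.
  assert (HC : C / eps < INR n + 1) by lra.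
  apply Rle_lt_trans with (C / (INR n + 1)); auto.
  assert (0 < INR n + 1) by (pose proof (pos_INR n); lra).
  apply (Rmult_lt_reg_r (INR n + 1)); auto.
  unfold Rdiv at 1. rewrite Rmult_assoc, Rinv_l, Rmult_1_r by lra.
  apply (Rmult_lt_reg_r (/ eps)). apply Rinv_0_lt_compat; auto.
  replace (eps * (INR n + 1) * / eps) with (INR n + 1) by (field; lra). exact HC.
Qed.

Lemma Gamma_rec x : 0 < x -> Gamma (x + 1) = x * Gamma x.
Proof.
  intros Hx.
  set (g := fun s => exp (x * ln s - s)).
  assert (Hn : forall n, Sq (x + 1) n = g (aN n) - g (bN n) + x * Sq x n).
  { intros n. pose proof (aN_pos n). pose proof (aN_le1 n). pose proof (bN_ge1 n).
    set (a := aN n). set (b := bN n). fold a b in H, H0, H1.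
    assert (Hi : is_RInt (fun t => minus (fg (x + 1) t) (scal x (fg x t))) a b
                   (minus (Sq (x + 1) n) (scal x (Sq x n)))).
    { apply (@is_RInt_minus R_NormedModule).
      apply (@RInt_correct R_CompleteNormedModule); apply fg_exRInt; lra.
      apply (@is_RInt_scal R_NormedModule).
      apply (@RInt_correct R_CompleteNormedModule); apply fg_exRInt; lra. }
    assert (Hd : is_RInt (fun t => minus (fg (x + 1) t) (scal x (fg x t))) a b
                   (minus (- g b) (- g a))).
    { apply (@is_RInt_derive R_CompleteNormedModule (fun s => - g s)).
      - intros t Ht. rewrite Rmin_left in Ht by lra. rewrite Rmax_right in Ht by lra.
        unfold g. auto_derive. lra.
        unfold minus, plus, opp, scal; simpl. unfold mult; simpl. unfold fg.
        replace ((x + 1 - 1) * ln t - t) with (x * ln t - t) by ring.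
        replace ((x - 1) * ln t - t) with ((x * ln t - t) - ln t) by ring.
        rewrite exp_sub_ln by lra. unfold Rminus. field. lra.
      - intros t Ht. rewrite Rmin_left in Ht by lra. rewrite Rmax_right in Ht by lra.
        unfold minus, plus, opp, scal; simpl. unfold mult; simpl. unfold fg.
        apply (@ex_derive_continuous R_AbsRing R_NormedModule). auto_derive. lra. }
    pose proof (is_RInt_unique _ _ _ _ Hi) as E1. pose proof (is_RInt_unique _ _ _ _ Hd) as E2.
    rewrite E1 in E2. unfold minus, plus, opp, scal in E2; simpl in E2. unfold mult in E2; simpl in E2.
    lra. }
  assert (La : is_lim_seq (fun n => g (aN n)) 0).
  { apply lim0 with (1 + 1 / x). intros n. unfold g, aN. split. apply Rlt_le, exp_pos.
    rewrite ln_exp. pose proof (pos_INR n). pose proof (exp_pos (- INR n)).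
    apply Rle_trans with (exp (- (x * INR n))).
    apply exp_le_inc. nra.
    pose proof (exp_ineq1_le (x * INR n)).
    assert (exp (- (x * INR n)) * exp (x * INR n) = 1) by (rewrite <- exp_plus; replace (- (x * INR n) + x * INR n) with 0 by ring; apply exp_0).
    pose proof (exp_pos (- (x * INR n))).
    apply (Rmult_le_reg_r (INR n + 1)). lra.
    unfold Rdiv. rewrite Rmult_assoc, Rinv_l, Rmult_1_r by lra.
    assert (exp (- (x * INR n)) * (1 + x * INR n) <= 1) by nra.
    assert ((1 + 1 / x) * (1 + x * INR n) >= INR n + 1).
    { replace ((1 + 1 / x) * (1 + x * INR n)) with (1 + 1/x + x * INR n + INR n) by (field; lra).
      assert (0 < 1 / x) by (apply Rdiv_lt_0_compat; lra). nra. }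
    replace (1 + 1 * / x) with (1 + 1 / x) by (unfold Rdiv; ring).
    assert (0 < 1 / x) by (apply Rdiv_lt_0_compat; lra).
    apply Rle_trans with (exp (- (x * INR n)) * ((1 + 1 / x) * (1 + x * INR n))).
    apply Rmult_le_compat_l; lra.
    replace (exp (- (x * INR n)) * ((1 + 1 / x) * (1 + x * INR n))) with
      ((1 + 1 / x) * (exp (- (x * INR n)) * (1 + x * INR n))) by ring.
    rewrite <- (Rmult_1_r (1 + 1 / x)) at 2. apply Rmult_le_compat_l; lra. }
  destruct (tail_bound (x + 1)) as [K [HK HKb]].
  assert (Lb : is_lim_seq (fun n => g (bN n)) 0).
  { apply lim0 with K. intros n. pose proof (bN_ge1 n). unfold g. split. apply Rlt_le, exp_pos.
    replace (x * ln (bN n) - bN n) with (((x + 1) * ln (bN n) - bN n) - ln (bN n)) by ring.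
    rewrite exp_sub_ln by lra. unfold bN at 2. unfold Rdiv.
    apply Rmult_le_compat_r. apply Rlt_le, Rinv_0_lt_compat. unfold bN in H; lra.
    apply HKb; auto. }
  assert (L : is_lim_seq (fun n => g (aN n) - g (bN n) + x * Sq x n) (0 - 0 + x * Gamma x)).
  { apply is_lim_seq_plus'. apply is_lim_seq_minus'; auto.
    apply is_lim_seq_mult'. apply is_lim_seq_const. apply Gamma_lim; auto. }
  apply (is_lim_seq_ext _ (Sq (x + 1))) in L.
  2:{ intros n. symmetry. apply Hn. }
  pose proof (lim_uniq _ _ _ (Gamma_lim (x + 1) ltac:(lra)) L). lra.
Qed.

Definition hn (n : nat) : R := 0 + / (INR n + 1).
Definition Qn (x : R) (n : nat) : R := (Gamma (x + hn n) - Gamma x) / hn n.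

Lemma hn_pos n : 0 < hn n.
Proof. unfold hn. pose proof (pos_INR n). rewrite Rplus_0_l. apply Rinv_0_lt_compat. lra. Qed.

Lemma hn_decr n : hn (S n) <= hn n.
Proof.
  unfold hn. rewrite S_INR. pose proof (pos_INR n). rewrite !Rplus_0_l.
  apply Rinv_le_contravar; lra.
Qed.

Lemma slope_mono x h1 h2 : 0 < x -> 0 < h1 <= h2 ->
  (Gamma (x + h1) - Gamma x) / h1 <= (Gamma (x + h2) - Gamma x) / h2.
Proof.
  intros Hx Hh.
  set (l := 1 - h1 / h2).
  assert (Hl : 0 <= l <= 1).
  { unfold l. split. assert (h1 / h2 <= 1). { apply (Rmult_le_reg_r h2). lra. unfold Rdiv. rewrite Rmult_assoc, Rinv_l; lra. } lra.
    assert (0 < h1 / h2) by (apply Rdiv_lt_0_compat; lra). lra. }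
  pose proof (Gamma_convex l x (x + h2) Hl Hx ltac:(lra)) as H.
  replace (l * x + (1 - l) * (x + h2)) with (x + h1) in H by (unfold l; field; lra).
  unfold l in H.
  apply (Rmult_le_reg_r h1). lra.
  unfold Rdiv at 1. rewrite Rmult_assoc, Rinv_l, Rmult_1_r by lra.
  replace ((Gamma (x + h2) - Gamma x) / h2 * h1) with
    ((1 - (1 - h1 / h2)) * Gamma (x + h2) - (1 - h1/h2) * Gamma x + Gamma x - Gamma x - (1 - (1 - h1/h2)) * Gamma x + (1 - h1/h2) * Gamma x)
    by (field; lra).
  lra.
Qed.

Lemma slope_lower x h : 0 < x -> 0 < h ->
  (Gamma x - Gamma (x / 2)) / (x / 2) <= (Gamma (x + h) - Gamma x) / h.
Proof.
  intros Hx Hh.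
  set (d := x / 2). assert (Hd : 0 < d) by (unfold d; lra).
  set (l := h / (h + d)).
  assert (Hl : 0 <= l <= 1).
  { unfold l. split. apply Rlt_le, Rdiv_lt_0_compat; lra.
    apply (Rmult_le_reg_r (h + d)). lra. unfold Rdiv. rewrite Rmult_assoc, Rinv_l; lra. }
  pose proof (Gamma_convex l (x / 2) (x + h) Hl ltac:(lra) ltac:(lra)) as H.
  replace (l * (x / 2) + (1 - l) * (x + h)) with x in H by (unfold l, d; field; lra).
  fold d in H. unfold l in H.
  assert (E : (h + d) * Gamma x <= h * Gamma d + d * Gamma (x + h)).
  { apply (Rmult_le_compat_l (h + d)) in H. 2: lra.
    replace ((h + d) * (h / (h + d) * Gamma d + (1 - h / (h + d)) * Gamma (x + h)))
      with (h * Gamma d + d * Gamma (x + h)) in H by (field; lra). exact H. }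
  apply (Rmult_le_reg_r (d * h)). nra.
  replace ((Gamma x - Gamma d) / d * (d * h)) with (h * (Gamma x - Gamma d)) by (field; lra).
  replace ((Gamma (x + h) - Gamma x) / h * (d * h)) with (d * (Gamma (x + h) - Gamma x)) by (field; lra).
  lra.
Qed.

Lemma Qn_lim x : 0 < x -> is_lim_seq (Qn x) (Derive Gamma x).
Proof.
  intros Hx.
  assert (Hd : forall n, Qn x (S n) <= Qn x n).
  { intros n. unfold Qn. apply slope_mono; auto. split. apply hn_pos. apply hn_decr. }
  assert (Hb : forall n, (Gamma x - Gamma (x / 2)) / (x / 2) <= Qn x n).
  { intros n. unfold Qn. apply slope_lower; auto. apply hn_pos. }
  destruct (ex_finite_lim_seq_decr _ _ Hd Hb) as [l Hl].
  assert (E : Derive Gamma x = real (Lim_seq (Qn x))) by reflexivity.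
  rewrite E, (is_lim_seq_unique _ _ Hl). exact Hl.
Qed.

Lemma hn_lim : is_lim_seq hn 0.
Proof.
  apply lim0 with 1. intros n. pose proof (hn_pos n). split. lra.
  unfold hn. rewrite Rplus_0_l. unfold Rdiv. lra.
Qed.

Lemma Derive_rec x : 0 < x -> Derive Gamma (x + 1) = Gamma x + x * Derive Gamma x.
Proof.
  intros Hx.
  assert (Hn : forall n, Qn (x + 1) n = Gamma x + hn n * Qn x n + x * Qn x n).
  { intros n. pose proof (hn_pos n). unfold Qn.
    replace (x + 1 + hn n) with ((x + hn n) + 1) by ring.
    rewrite !Gamma_rec by lra. field. lra. }
  assert (L : is_lim_seq (fun n => Gamma x + hn n * Qn x n + x * Qn x n)
                (Gamma x + 0 * Derive Gamma x + x * Derive Gamma x)).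
  { apply is_lim_seq_plus'. apply is_lim_seq_plus'. apply is_lim_seq_const.
    apply is_lim_seq_mult'. apply hn_lim. apply Qn_lim; auto.
    apply is_lim_seq_mult'. apply is_lim_seq_const. apply Qn_lim; auto. }
  apply (is_lim_seq_ext _ (Qn (x + 1))) in L.
  2:{ intros n. symmetry. apply Hn. }
  pose proof (lim_uniq _ _ _ (Qn_lim (x + 1) ltac:(lra)) L). lra.
Qed.

Lemma four_point a b h : 0 < a < b -> 0 < h ->
  Gamma (a + h) * Gamma b <= Gamma a * Gamma (b + h).
Proof.
  intros Hab Hh.
  set (l := (b - a) / (b - a + h)).
  assert (Hl : 0 <= l <= 1).
  { unfold l. split. apply Rlt_le, Rdiv_lt_0_compat; lra.
    apply (Rmult_le_reg_r (b - a + h)). lra. unfold Rdiv. rewrite Rmult_assoc, Rinv_l; lra. }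
  assert (Hl' : 0 <= 1 - l <= 1) by lra.
  pose proof (holder l a (b + h) Hl ltac:(lra) ltac:(lra)) as H1.
  pose proof (holder (1 - l) a (b + h) Hl' ltac:(lra) ltac:(lra)) as H2.
  replace (l * a + (1 - l) * (b + h)) with (a + h) in H1 by (unfold l; field; lra).
  replace ((1 - l) * a + (1 - (1 - l)) * (b + h)) with b in H2 by (unfold l; field; lra).
  pose proof (Gamma_pos (a + h) ltac:(lra)). pose proof (Gamma_pos b ltac:(lra)).
  pose proof (Gamma_pos a ltac:(lra)). pose proof (Gamma_pos (b + h) ltac:(lra)).
  apply Rle_trans with (exp (l * ln (Gamma a) + (1 - l) * ln (Gamma (b + h))) *
                        exp ((1 - l) * ln (Gamma a) + (1 - (1 - l)) * ln (Gamma (b + h)))).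
  apply Rmult_le_compat; lra.
  rewrite <- exp_plus.
  replace (l * ln (Gamma a) + (1 - l) * ln (Gamma (b + h)) + ((1 - l) * ln (Gamma a) + (1 - (1 - l)) * ln (Gamma (b + h))))
    with (ln (Gamma a) + ln (Gamma (b + h))) by ring.
  rewrite exp_plus, !exp_ln by lra. lra.
Qed.

Definition psi (x : R) := Derive Gamma x / Gamma x.

Lemma psi_eq x : digamma x = psi x.
Proof. reflexivity. Qed.

Lemma psi_rec x : 0 < x -> psi (x + 1) = psi x + 1 / x.
Proof.
  intros Hx. unfold psi. rewrite Derive_rec, Gamma_rec by auto.
  pose proof (Gamma_pos x Hx). field. lra.
Qed.

Lemma psi_mono a b : 0 < a <= b -> psi a <= psi b.
Proof.
  intros [Ha [Hab | Hab]]. 2:{ subst; lra. }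
  pose proof (Gamma_pos a Ha) as Ga. pose proof (Gamma_pos b ltac:(lra)) as Gb.
  assert (Hn : forall n, Qn a n * / Gamma a <= Qn b n * / Gamma b).
  { intros n. pose proof (hn_pos n). unfold Qn.
    pose proof (four_point a b (hn n) ltac:(lra) H).
    replace ((Gamma (a + hn n) - Gamma a) / hn n * / Gamma a) with ((Gamma (a + hn n) / Gamma a - 1) / hn n) by (field; lra).
    replace ((Gamma (b + hn n) - Gamma b) / hn n * / Gamma b) with ((Gamma (b + hn n) / Gamma b - 1) / hn n) by (field; lra).
    unfold Rdiv. apply Rmult_le_compat_r. apply Rlt_le, Rinv_0_lt_compat; lra.
    apply Rplus_le_compat_r.
    apply (Rmult_le_reg_r (Gamma a * Gamma b)). nra.
    replace (Gamma (a + hn n) * / Gamma a * (Gamma a * Gamma b)) with (Gamma (a + hn n) * Gamma b) by (field; lra).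
    replace (Gamma (b + hn n) * / Gamma b * (Gamma a * Gamma b)) with (Gamma a * Gamma (b + hn n)) by (field; lra).
    lra. }
  pose proof (is_lim_seq_le _ _ _ _ Hn (is_lim_seq_mult' _ _ _ _ (Qn_lim a Ha) (is_lim_seq_const (/ Gamma a)))
               (is_lim_seq_mult' _ _ _ _ (Qn_lim b ltac:(lra)) (is_lim_seq_const (/ Gamma b)))).
  simpl in H. unfold psi, Rdiv. exact H.
Qed.

Lemma lowerA_N y c : 0 < y -> 0 < c <= 1 -> forall N : nat,
  psi (y + c) - psi y >= c / (y * (y + c)) + c / (1 + y) - c / (INR N + 1 + y)
                         + (psi (y + c + (INR N + 1)) - psi (y + (INR N + 1))).
Proof.
  intros Hy Hc N. induction N.
  - simpl INR. rewrite Rplus_0_l.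
    rewrite (psi_rec (y + c)) by lra. rewrite (psi_rec y) by lra.
    replace (c / (y * (y + c))) with (1 / y - 1 / (y + c)) by (field; lra).
    replace (1 + y) with (y + 1) by ring. lra.
  - rewrite S_INR. set (w := y + (INR N + 1)).
    assert (Hw : 0 < w) by (unfold w; pose proof (pos_INR N); lra).
    replace (y + c + (INR N + 1 + 1)) with ((w + c) + 1) by (unfold w; ring).
    replace (y + (INR N + 1 + 1)) with (w + 1) by (unfold w; ring).
    replace (y + c + (INR N + 1)) with (w + c) in IHN by (unfold w; ring).
    fold w in IHN.
    rewrite (psi_rec (w + c)) by lra. rewrite (psi_rec w) by lra.
    replace (INR N + 1 + 1 + y) with (w + 1) by (unfold w; ring).
    replace (INR N + 1 + y) with w in IHN by (unfold w; ring).
    assert (1 / w - 1 / (w + c) >= c / w - c / (w + 1)).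
    { replace (1 / w - 1 / (w + c)) with (c / (w * (w + c))) by (field; lra).
      replace (c / w - c / (w + 1)) with (c / (w * (w + 1))) by (field; lra).
      apply Rle_ge. unfold Rdiv. apply Rmult_le_compat_l. lra.
      apply Rinv_le_contravar. nra. nra. }
    assert (c / w = c * (1 / w)) by (field; lra). lra.
Qed.

Lemma lowerA y c : 0 < y -> 0 < c <= 1 ->
  psi (y + c) - psi y >= c / (y * (y + c)) + c / (1 + y).
Proof.
  intros Hy Hc.
  assert (HN : forall N : nat, psi (y + c) - psi y >= c / (y * (y + c)) + c / (1 + y) - c / (INR N + 1 + y)).
  { intros N. pose proof (lowerA_N y c Hy Hc N).
    pose proof (psi_mono (y + (INR N + 1)) (y + c + (INR N + 1)) ltac:(pose proof (pos_INR N); lra)). lra. }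
  apply Rnot_lt_ge. intros Hlt.
  set (D := c / (y * (y + c)) + c / (1 + y) - (psi (y + c) - psi y)).
  assert (HD : 0 < D) by (unfold D; lra).
  destruct (nat_gt (c / D)) as [N HNg].
  specialize (HN N).
  assert (c / (INR N + 1 + y) < D).
  { assert (0 < INR N + 1 + y) by (pose proof (pos_INR N); lra).
    apply (Rmult_lt_reg_r (INR N + 1 + y)); auto.
    unfold Rdiv at 1. rewrite Rmult_assoc, Rinv_l, Rmult_1_r by lra.
    assert (c < D * INR N).
    { apply (Rmult_lt_reg_r (/ D)). apply Rinv_0_lt_compat; auto.
      replace (D * INR N * / D) with (INR N) by (field; lra). exact HNg. }
    nra. }
  unfold D in H. lra.
Qed.

Lemma upperB_N z h : 0 < z -> 0 < h <= 1 -> forall N : nat,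
  psi (z + h) - psi z <= h / (z * (z + h)) + h / (z + h) - h / (z + h + INR N)
                         + (psi (z + h + (INR N + 1)) - psi (z + (INR N + 1))).
Proof.
  intros Hz Hh N. induction N.
  - simpl INR. rewrite Rplus_0_l, Rplus_0_r.
    rewrite (psi_rec (z + h)) by lra. rewrite (psi_rec z) by lra.
    replace (h / (z * (z + h))) with (1 / z - 1 / (z + h)) by (field; lra). lra.
  - rewrite S_INR. set (w := z + (INR N + 1)).
    assert (Hw : 1 <= w - z) by (unfold w; pose proof (pos_INR N); lra).
    replace (z + h + (INR N + 1 + 1)) with ((w + h) + 1) by (unfold w; ring).
    replace (z + (INR N + 1 + 1)) with (w + 1) by (unfold w; ring).
    replace (z + h + (INR N + 1)) with (w + h) in IHN by (unfold w; ring).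
    fold w in IHN.
    rewrite (psi_rec (w + h)) by lra. rewrite (psi_rec w) by lra.
    replace (z + h + (INR N + 1)) with (w + h) by (unfold w; ring).
    replace (z + h + INR N) with (w - 1 + h) in IHN by (unfold w; ring).
    assert (1 / w - 1 / (w + h) <= h / (w - 1 + h) - h / (w + h)).
    { replace (1 / w - 1 / (w + h)) with (h / (w * (w + h))) by (field; lra).
      replace (h / (w - 1 + h) - h / (w + h)) with (h / ((w - 1 + h) * (w + h))) by (field; lra).
      unfold Rdiv. apply Rmult_le_compat_l. lra.
      apply Rinv_le_contravar. nra. nra. }
    lra.
Qed.

Lemma upperB z h : 0 < z -> 0 < h <= 1 ->
  psi (z + h) - psi z <= h / (z * (z + h)) + h / (z + h).
Proof.
  intros Hz Hh.
  assert (HN : forall N : nat, psi (z + h) - psi z <= h / (z * (z + h)) + h / (z + h) + 1 / (z + (INR N + 1))).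
  { intros N. pose proof (upperB_N z h Hz Hh N).
    pose proof (pos_INR N).
    pose proof (psi_mono (z + h + (INR N + 1)) (z + (INR N + 1) + 1) ltac:(lra)).
    rewrite psi_rec in H1 by lra.
    assert (0 <= h / (z + h + INR N)) by (apply Rlt_le, Rdiv_lt_0_compat; lra). lra. }
  apply Rnot_lt_le. intros Hlt.
  set (D := psi (z + h) - psi z - (h / (z * (z + h)) + h / (z + h))).
  assert (HD : 0 < D) by (unfold D; lra).
  destruct (nat_gt (1 / D)) as [N HNg].
  specialize (HN N).
  assert (1 / (z + (INR N + 1)) < D).
  { assert (0 < z + (INR N + 1)) by (pose proof (pos_INR N); lra).
    apply (Rmult_lt_reg_r (z + (INR N + 1))); auto.
    unfold Rdiv at 1. rewrite Rmult_assoc, Rinv_l, Rmult_1_r by lra.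
    assert (1 < D * INR N).
    { apply (Rmult_lt_reg_r (/ D)). apply Rinv_0_lt_compat; auto.
      replace (D * INR N * / D) with (INR N) by (field; lra). unfold Rdiv in HNg. lra. }
    nra. }
  unfold D in H. lra.
Qed.

Lemma final_arith K T Rr Rb : 2 <= K -> 2 * K <= T -> 1 <= Rr -> Rr + K <= T -> T < Rb * K ->
  K * (K * T / (Rr * (Rr + K)) + K / (T + Rr)) > T / (Rb * (Rb + 1)) + 1 / (Rb + 1).
Proof.
  intros HK HT HR1 HR2 HRb.
  assert (HRbp : 0 < Rb) by nra.
  assert (HT0 : 0 < T) by lra.
  assert (HRR : 0 < Rr * (Rr + K)) by (apply Rmult_lt_0_compat; lra).
  assert (HB2 : 0 < Rb * (Rb + 1)) by (apply Rmult_lt_0_compat; lra).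
  assert (s1 : K * T / (Rr * (Rr + K)) > K / T).
  { apply Rlt_gt. apply (Rmult_lt_reg_r (T * (Rr * (Rr + K)))). apply Rmult_lt_0_compat; lra.
    replace (K / T * (T * (Rr * (Rr + K)))) with (K * (Rr * (Rr + K))) by (field; repeat split; nra).
    replace (K * T / (Rr * (Rr + K)) * (T * (Rr * (Rr + K)))) with (K * (T * T)) by (field; repeat split; nra).
    apply Rmult_lt_compat_l. lra. nra. }
  assert (s2 : K / (T + Rr) >= K / (2 * T)).
  { apply Rle_ge. unfold Rdiv. apply Rmult_le_compat_l. lra. apply Rinv_le_contravar; lra. }
  assert (s3 : T / (Rb * (Rb + 1)) < K * K / T).
  { apply (Rmult_lt_reg_r (T * (Rb * (Rb + 1)))). apply Rmult_lt_0_compat; lra.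
    replace (T / (Rb * (Rb + 1)) * (T * (Rb * (Rb + 1)))) with (T * T) by (field; repeat split; nra).
    replace (K * K / T * (T * (Rb * (Rb + 1)))) with ((Rb * K) * (Rb * K) + K * K * Rb) by (field; repeat split; nra).
    nra. }
  assert (s4 : 1 / (Rb + 1) < K / T).
  { apply (Rmult_lt_reg_r (T * (Rb + 1))). apply Rmult_lt_0_compat; lra.
    replace (1 / (Rb + 1) * (T * (Rb + 1))) with T by (field; repeat split; nra).
    replace (K / T * (T * (Rb + 1))) with (Rb * K + K) by (field; repeat split; nra). lra. }
  assert (E1 : K * (K / T) = K * K / T) by (field; repeat split; nra).
  assert (E2 : K * (K / (2 * T)) = K * K / (2 * T)) by (field; repeat split; nra).
  assert (E3 : K * K / T + K * K / (2 * T) >= K * K / T + K / T).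
  { replace (K * K / (2 * T)) with ((K * K / 2) / T) by (field; repeat split; nra).
    apply Rle_ge, Rplus_le_compat_l. unfold Rdiv. apply Rmult_le_compat_r.
    apply Rlt_le, Rinv_0_lt_compat; lra. nra. }
  assert (K * (K * T / (Rr * (Rr + K)) + K / (T + Rr)) >= K * (K / T) + K * (K / (2 * T)) + K * (K * T / (Rr * (Rr + K)) - K / T)).
  { nra. }
  assert (0 < K * (K * T / (Rr * (Rr + K)) - K / T)) by (apply Rmult_lt_0_compat; lra).
  lra.
Qed.

Theorem lemma5p5 (k t m r rbar : nat) :
  (2 <= k)%nat -> (2 <= t)%nat -> Nat.gcd k t = 1%nat ->
  (2 <= m)%nat -> (m * k <= t)%nat -> (t < (m + 1) * k)%nat ->
  (1 <= r)%nat -> (r <= t - k)%nat ->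
  (1 <= rbar)%nat -> (rbar <= t)%nat -> ((rbar * k) mod t = r mod t)%nat ->
  (m + 1 <= rbar)%nat ->
  INR k * psi_c (INR k / INR t) (INR r / INR t)
    > psi_c (1 / INR t) (INR rbar / INR t).
Proof.
  intros Hk Ht _ Hm Hmk Htm Hr1 Hr2 Hb1 Hb2 _ Hmb.
  assert (N1 : (2 * k <= t)%nat) by nia.
  assert (N2 : (r + k <= t)%nat) by lia.
  assert (N3 : (t < rbar * k)%nat) by nia.
  apply le_INR in Hk. apply le_INR in N1. apply le_INR in N2. apply lt_INR in N3.
  apply le_INR in Hr1. apply le_INR in Hb1.
  rewrite mult_INR in N1, N3. rewrite plus_INR in N2.
  change (INR 2) with 2 in *. change (INR 1) with 1 in *.
  set (K := INR k) in *. set (T := INR t) in *. set (Rr := INR r) in *. set (Rb := INR rbar) in *.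
  assert (HT : 0 < T) by lra.
  unfold psi_c. rewrite !psi_eq.
  pose proof (lowerA (Rr / T) (K / T)) as HA.
  pose proof (upperB (Rb / T) (1 / T)) as HB.
  assert (Hy : 0 < Rr / T) by (apply Rdiv_lt_0_compat; lra).
  assert (Hz : 0 < Rb / T) by (apply Rdiv_lt_0_compat; lra).
  assert (Hc : 0 < K / T <= 1).
  { split. apply Rdiv_lt_0_compat; lra.
    apply (Rmult_le_reg_r T). lra. unfold Rdiv. rewrite Rmult_assoc, Rinv_l; lra. }
  assert (Hh : 0 < 1 / T <= 1).
  { split. apply Rdiv_lt_0_compat; lra.
    apply (Rmult_le_reg_r T). lra. unfold Rdiv. rewrite Rmult_assoc, Rinv_l; lra. }
  specialize (HA Hy Hc). specialize (HB Hz Hh).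
  replace (K / T / (Rr / T * (Rr / T + K / T)) + K / T / (1 + Rr / T))
    with (K * T / (Rr * (Rr + K)) + K / (T + Rr)) in HA by (field; repeat split; lra).
  replace (1 / T / (Rb / T * (Rb / T + 1 / T)) + 1 / T / (Rb / T + 1 / T))
    with (T / (Rb * (Rb + 1)) + 1 / (Rb + 1)) in HB by (field; repeat split; lra).
  pose proof (final_arith K T Rr Rb Hk N1 Hr1 ltac:(lra) ltac:(lra)).
  assert (K * (psi (Rr / T + K / T) - psi (Rr / T)) >= K * (K * T / (Rr * (Rr + K)) + K / (T + Rr))).
  { apply Rle_ge, Rmult_le_compat_l. lra. lra. }
  unfold psi in *. unfold digamma. lra.
Qed.
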